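(* Let $T\in\mathcal{M}_k(F)$ be a decision table and $\psi$ a complexity measure over $\mathcal{M}_k(F)$. Then $\psi^a(T)\le\psi^d(T)\le\psi^i(T)$.
   Context: Let $\mathbb{N}=\{0,1,2,\dots\}$; for an integer $k\ge 2$ let $E_k=\{0,1,\dots,k-1\}$; let $\mathcal{P}(\mathbb{N})$ be the set of nonempty finite subsets of $\mathbb{N}$. Let $F$ be a nonempty set (of attribute names). A decision table $T\in\mathcal{M}_k(F)$ is a rectangular table with $n\ge 1$ columns labeled with attributes $f_1,\dots,f_n\in F$ (any two columns labeled with the same attribute are equal), whose rows are pairwise different tuples from $E_k^n$ (the set of rows may be empty), each row being labeled with a set of decisions from $\mathcal{P}(\mathbb{N})$. Write $At(T)=\{f_1,\dots,f_n\}$ and $\Delta(T)$ for the set of rows. For a word $\alpha=(f_{i_1},\delta_1)\cdots(f_{i_m},\delta_m)$ with $f_{i_j}\in At(T)$, $\delta_j\in E_k$, the subtable $T\alpha$ consists of the rows of $T$ having value $\delta_j$ in column $f_{i_j}$ for all $j$ ($T\lambda=T$ for the empty word $\lambda$). A decision tree over $\mathcal{M}_k(F)$ is a finite directed tree with a root (unique node with no entering edge) and at least two nodes such that the root and the edges leaving the root are unlabeled, each worker node (neither root nor terminal) is labeled with an attribute from $F$, each edge leaving a worker node is labeled with a number from $E_k$, and each terminal node is labeled with a number from $\mathbb{N}$. For a complete path $\xi$ (root to terminal node) whose worker nodes are labeled $f_{j_1},\dots,f_{j_m}$ in order, with the edges leaving them labeled $\delta_1,\dots,\delta_m$, put $\pi(\xi)=(f_{j_1},\delta_1)\cdots(f_{j_m},\delta_m)$,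 $\varphi(\xi)=f_{j_1}\cdots f_{j_m}$ (both empty if $m=0$), and let $\tau(\xi)$ be the label of its terminal node. A nondeterministic decision tree for $T$ is a decision tree $\Gamma$ whose worker-node attributes lie in $At(T)$, such that $\bigcup_{\xi}\Delta(T\pi(\xi))=\Delta(T)$ (union over complete paths), and for every row $r\in\Delta(T)$ and every complete path $\xi$ with $r\in\Delta(T\pi(\xi))$, $\tau(\xi)$ belongs to the decision set of $r$. A decision tree is deterministic if exactly one edge leaves the root and the edges leaving each worker node have pairwise different labels; a deterministic decision tree for $T$ is a deterministic decision tree that is a nondeterministic decision tree for $T$. A complexity measure over $\mathcal{M}_k(F)$ is any map $\psi:F^*\to\mathbb{N}$, where $F^*$ is the set of finite words over $F$ including the empty word $\lambda$. For a tree, $\psi(\Gamma)=\max_\xi\psi(\varphi(\xi))$ over complete paths. For $T$ with columns labeled $f_1,\dots,f_n$: $\psi^i(T)=\psi(f_1\cdots f_n)$, $\psi^d(T)$ is the minimum complexity of a deterministic decision tree for $T$, $\psi^a(T)$ the minimum complexity of a nondeterministic decision tree for $T$. *)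

(* Defs.v *)
From mathcomp Require Import all_boot.
From Stdlib Require List.
Set Implicit Arguments. Unset Strict Implicit. Unset Printing Implicit Defensive.

(* A table: column labels (attributes) f_1..f_n, and rows, each row being
   a tuple of values (seq nat of length n) together with its decision set
   (a nonempty finite subset of N, represented by a nonempty seq nat). *)
Record dtable (F : Type) := DTable {
  dt_attrs : seq F;
  dt_rows  : seq (seq nat * seq nat)
}.

Definition wf_table (F : Type) (k : nat) (T : dtable F) : Prop :=
  [/\ 0 < size (dt_attrs T),
      (forall r, List.In r (dt_rows T) ->
          [/\ size r.1 = size (dt_attrs T), all (fun v => v < k) r.1 & r.2 <> [::]]),
      uniq (map fst (dt_rows T)) &
      (forall i j f, List.nth_error (dt_attrs T) i = Some f ->
                     List.nth_error (dt_attrs T) j = Some f ->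
         forall r, List.In r (dt_rows T) -> nth 0 r.1 i = nth 0 r.1 j)].

Definition in_sub (F : Type) (T : dtable F) (alpha : seq (F * nat)) (r : seq nat) : Prop :=
  forall f d, List.In (f, d) alpha ->
    forall i, List.nth_error (dt_attrs T) i = Some f -> nth 0 r i = d.

(* A non-root node: a terminal node labelled with a number, or a worker node
   labelled with an attribute together with its outgoing edges (label, child). *)
Inductive dnode (F : Type) : Type :=
| Leaf of nat
| Work of F & seq (nat * dnode F).

(* A decision tree: the (unlabelled) root given by the list of its children
   (reached through unlabelled edges). *)
Definition dtree (F : Type) := seq (dnode F).

Inductive wf_node (F : Type) (k : nat) (A : F -> Prop) : dnode F -> Prop :=
| wf_leaf d : wf_node k A (Leaf F d)
| wf_work f ch :
    A f -> ch <> [::] ->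
    (forall d c, List.In (d, c) ch -> d < k) ->
    (forall d c, List.In (d, c) ch -> wf_node k A c) ->
    wf_node k A (Work f ch).

(* decision tree over M_k(F) whose worker attributes satisfy A
   (at least two nodes: the root has at least one child) *)
Definition wf_tree (F : Type) (k : nat) (A : F -> Prop) (G : dtree F) : Prop :=
  G <> [::] /\ (forall c, List.In c G -> wf_node k A c).

(* node_path c p t : p = pi of a path from node c down to a terminal node labelled t *)
Inductive node_path (F : Type) : dnode F -> seq (F * nat) -> nat -> Prop :=
| np_leaf t : node_path (Leaf F t) [::] t
| np_work f ch d c p t :
    List.In (d, c) ch -> node_path c p t -> node_path (Work f ch) ((f, d) :: p) t.

Definition tree_path (F : Type) (G : dtree F) (p : seq (F * nat)) (t : nat) : Prop :=
  exists2 c, List.In c G & node_path c p t.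

Inductive det_node (F : Type) : dnode F -> Prop :=
| det_leaf t : det_node (Leaf F t)
| det_work f ch :
    uniq (map fst ch) ->
    (forall d c, List.In (d, c) ch -> det_node c) ->
    det_node (Work f ch).

Definition det_tree (F : Type) (G : dtree F) : Prop :=
  exists c, G = [:: c] /\ det_node c.

Definition ndtree_for (F : Type) (k : nat) (T : dtable F) (G : dtree F) : Prop :=
  [/\ wf_tree k (fun f => List.In f (dt_attrs T)) G,
      (forall r, List.In r (dt_rows T) ->
          exists p t, tree_path G p t /\ in_sub T p r.1) &
      (forall r p t, List.In r (dt_rows T) -> tree_path G p t ->
          in_sub T p r.1 -> t \in r.2)].

Definition dtree_for (F : Type) (k : nat) (T : dtable F) (G : dtree F) : Prop :=
  det_tree G /\ ndtree_for k T G.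

Definition tree_complexity (F : Type) (psi : seq F -> nat) (G : dtree F) (c : nat) : Prop :=
  (exists p t, tree_path G p t /\ psi (map fst p) = c) /\
  (forall p t, tree_path G p t -> psi (map fst p) <= c).

Definition is_min (P : nat -> Prop) (m : nat) : Prop :=
  P m /\ (forall m', P m' -> m <= m').

Definition det_values (F : Type) (k : nat) (psi : seq F -> nat) (T : dtable F) (c : nat) : Prop :=
  exists G, dtree_for k T G /\ tree_complexity psi G c.

Definition nondet_values (F : Type) (k : nat) (psi : seq F -> nat) (T : dtable F) (c : nat) : Prop :=
  exists G, ndtree_for k T G /\ tree_complexity psi G c.

Definition psi_i (F : Type) (psi : seq F -> nat) (T : dtable F) : nat := psi (dt_attrs T).

(* Main.v *)
Require Import Defs.
From Stdlib Require Import Classical.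
From mathcomp Require Import all_boot.
Set Implicit Arguments. Unset Strict Implicit. Unset Printing Implicit Defensive.

Lemma ex_min (P : nat -> Prop) n : P n -> exists m, is_min P m.
Proof.
elim/ltn_ind: n => n IH Pn.
case: (classic (exists m, m < n /\ P m)) => [[m [lt Pm]]|H].
  exact: IH lt Pm.
exists n; split => // m' Pm'; rewrite leqNgt; apply/negP => lt; apply: H; by exists m'.
Qed.

Lemma In_mem (T : eqType) (x : T) s : List.In x s -> x \in s.
Proof. elim: s => //= y s IH [->|/IH]; rewrite inE ?eqxx // => ->; by rewrite orbT. Qed.

Lemma head_filter (s : seq (seq nat * seq nat)) r :
  uniq (map fst s) -> List.In r s -> head ([::],[::]) [seq q <- s | q.1 == r.1] = r.
Proof.
elim: s => //= q s IH /andP [nq us] [->|Hr]; first by rewrite eqxx.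
case: eqP => [e|_]; last exact: IH.
by case/negP: nq; rewrite e; apply: map_f; apply: In_mem.
Qed.

Lemma zip_in (F : Type) (fs : seq F) (ws : seq nat) j f :
  size ws = size fs -> List.nth_error fs j = Some f -> List.In (f, nth 0 ws j) (zip fs ws).
Proof.
elim: fs ws j => [|g fs IH] [|w ws] [|j] //= [e].
- by move=> [->]; left.
- by move=> H; right; apply: IH.
Qed.

Lemma in_zip (F : Type) (fs : seq F) (ws : seq nat) f d :
  List.In (f, d) (zip fs ws) -> exists j, List.nth_error fs j = Some f /\ d = nth 0 ws j.
Proof.
elim: fs ws => [|g fs IH] [|w ws] //= [[-> ->]|H]; first by exists 0.
by case: (IH _ H) => j [? ?]; exists j.+1.
Qed.

Section Build.
Variable F : Type.
Variable k : nat.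
Variable lab : seq nat -> nat.

Fixpoint build (fs : seq F) (vals : seq nat) : dnode F :=
  match fs with
  | [::] => Leaf F (lab vals)
  | f :: fs' => Work f [seq (d, build fs' (rcons vals d)) | d <- iota 0 k]
  end.

Lemma build_path fs vals p t : node_path (build fs vals) p t ->
  exists ws, [/\ size ws = size fs, p = zip fs ws & t = lab (vals ++ ws)].
Proof.
elim: fs vals p t => [|f fs IH] vals p t /= H; inversion H; subst.
  by exists [::]; rewrite cats0.
move: H2 => /List.in_map_iff [d' [[e1 e2] _]]; subst.
case: (IH _ _ _ H5) => ws [s1 s2 s3]; exists (d :: ws); split => //=.
- by rewrite s1.
- by rewrite s2.
- by rewrite s3 cat_rcons.
Qed.

Lemma path_build fs vals ws : size ws = size fs -> all (fun v => v < k) ws ->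
  node_path (build fs vals) (zip fs ws) (lab (vals ++ ws)).
Proof.
elim: fs vals ws => [|f fs IH] vals [|w ws] //=; first by rewrite cats0; constructor.
move=> [e] /andP [wk aw]; apply: np_work.
  apply/(List.in_map_iff _ _ _); exists w; split => //.
  apply/List.in_seq; split => //=; apply/leP => //.
by rewrite -cat_rcons; apply: IH.
Qed.

Lemma build_wf (A : F -> Prop) fs vals : 0 < k -> (forall f, List.In f fs -> A f) ->
  wf_node k A (build fs vals).
Proof.
move=> k0; elim: fs vals => [|f fs IH] vals HA /=; first by constructor.
constructor.
- by apply: HA; left.
- by case: k k0.
- move=> d c /List.in_map_iff [d' [[<- _] /List.in_seq [_ /leP]]] //.
- move=> d c /List.in_map_iff [d' [[_ <-] _]]; apply: IH => g Hg; apply: HA; by right.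
Qed.

Lemma build_det fs vals : det_node (build fs vals).
Proof.
elim: fs vals => [|f fs IH] vals /=; constructor.
- by rewrite -map_comp /comp map_id iota_uniq.
- by move=> d c /List.in_map_iff [d' [[_ <-] _]].
Qed.
End Build.

Theorem lemma1 (F : Type) (k : nat) (T : dtable F) (psi : seq F -> nat) :
  2 <= k -> wf_table k T ->
  exists psia psid,
    [/\ is_min (nondet_values k psi T) psia,
        is_min (det_values k psi T) psid,
        psia <= psid &
        psid <= psi_i psi T].
Proof.
move=> k2 [n0 Hrows Huniq Hdup].
pose lab (vals : seq nat) := head 0 (head ([::],[::]) [seq q <- dt_rows T | q.1 == vals]).2.
pose G := [:: build k lab (dt_attrs T) [::]].
have HG : dtree_for k T G.
  split; first by exists (build k lab (dt_attrs T) [::]); split => //; apply: build_det.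
  split.
  - split => // c [<-|//]; apply: build_wf => //; by apply: leq_trans k2.
  - move=> r Hr; case: (Hrows r Hr) => s1 s2 _.
    exists (zip (dt_attrs T) r.1), (lab ([::] ++ r.1)); split.
      by exists (build k lab (dt_attrs T) [::]); [left|apply: path_build].
    move=> f d Hfd; case: (in_zip Hfd) => j [Hj Hd]; subst d => i Hi; exact: (Hdup i j f Hi Hj r Hr).
  - move=> r p t Hr HP Hs; case: HP => c Hc0 Hp; case: Hc0 => [Hc0|//]; subst c.
    case: (build_path Hp) => ws [sw ep et]; subst p t.
    case: (Hrows r Hr) => s1 s2 s3.
    have -> : [::] ++ ws = r.1.
      apply: (@eq_from_nth _ 0); first by rewrite s1 sw.
      move=> j; rewrite /= sw => lj.
      case E: (List.nth_error (dt_attrs T) j) => [f|].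
        by symmetry; apply: (Hs f (nth 0 ws j) (zip_in sw E) j E).
      by move/List.nth_error_None: E => /leP; rewrite leqNgt lj.
    rewrite /lab head_filter //.
    by case: (r.2) s3 => [|a l] //= _; rewrite inE eqxx.
have Hc : tree_complexity psi G (psi (dt_attrs T)).
  split.
    exists (zip (dt_attrs T) (nseq (size (dt_attrs T)) 0)), (lab ([::] ++ nseq (size (dt_attrs T)) 0)).
    split; last by congr psi; apply: unzip1_zip; rewrite size_nseq.
    exists (build k lab (dt_attrs T) [::]); [by left|apply: path_build].
      by rewrite size_nseq.
    by apply/allP => x /nseqP [-> _]; apply: leq_trans k2.
  move=> p t HP; case: HP => c Hc0 Hp; case: Hc0 => [Hc0|//]; subst c; case: (build_path Hp) => ws [sw ep _]; subst p.
  have -> : map fst (zip (dt_attrs T) ws) = dt_attrs T by apply: unzip1_zip; rewrite sw.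
  done.
have Hd : det_values k psi T (psi (dt_attrs T)) by exists G.
case: (ex_min Hd) => psid Hmin; case: (Hmin) => [[G' [[_ HG'] HcG']] Hmd].
have Hn : nondet_values k psi T psid by exists G'.
case: (ex_min Hn) => psia [Ha Hma].
exists psia, psid; split => //.
- exact: Hma.
- exact: Hmd.
Qed.
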